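(* Let $f:\Gamma\to\Gamma$ be an irreducible, expanding graph map which is a homotopy equivalence, with a fold decomposition consisting of $m$ total folds, and suppose $f$ has $p$ stacks. Then $$m\le\sum_{e\in\mathcal{E}\Gamma}\big(|f(e)|-1\big).$$ Moreover, if $f$ is periodic on the vertices of $\Gamma$ (i.e. $f_V$ is a bijection of $\mathcal{V}\Gamma$), then $p\le m$.
   Context: A graph $\Gamma$ is a finite 1-dimensional CW complex (multiple edges and loops allowed) with a chosen orientation on each edge; $\mathcal{V}\Gamma$, $\mathcal{E}\Gamma$ (positively oriented edges), $\mathcal{E}^\pm\Gamma$ (both orientations); $\bar e$ is the reverse, $\iota,\tau$ the endpoints. An edge path is a nonempty concatenation $u=e_1\cdots e_k$ with $\tau(e_i)=\iota(e_{i+1})$; $|u|=k$ counts edges without cancelling backtracks; $u$ traverses $e$ if $e$ or $\bar e$ occurs in it. A graph map $f:\Gamma_1\to\Gamma_2$ consists of a vertex map $f_V$ and an edge path $f(e)$ for each $e\in\mathcal{E}^\pm\Gamma_1$ with $\iota(f(e))=f_V(\iota(e))$, $f(\bar e)=\overline{f(e)}$; it extends to paths by concatenation; it is regarded as a continuous map. A graph isomorphism is a graph map with $f_V$ bijective restricting to a bijection from $\mathcal{E}^\pm\Gamma_1$ onto the single edges of $\Gamma_2$. $T(f)$ has $(i,j)$ entry the number of times $f(e_i)$ traverses $e_j$; $f$ is irreducible if $T(f)$ is irreducible and every vertex has valence $\ge3$; $f$ is expanding if $|f^n(e)|\to\infty$ for every edge. Folds: for distinct oriented edges $e_0,e_1$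 with $e_1\ne\bar e_0$ and $\iota(e_0)=\iota(e_1)$: the proper full fold of $e_1$ over $e_0$ subdivides $e_1=e_1''e_1'$ and identifies $e_1''$ with $e_0$ (map $e_1\mapsto e_0e_1'$, others fixed); the complete fold identifies $e_0$ with $e_1$ entirely; the partial fold subdivides $e_0=e_0'e_0''$, $e_1=e_1''e_1'$ and identifies $e_1''$ with $e_0'$ (map $e_0\mapsto e_0'e_0''$, $e_1\mapsto e_0'e_1'$). A fold decomposition with $m$ folds is $f=h\circ f_m\circ\cdots\circ f_1$ with $\Gamma_1=\Gamma$, $f_i:\Gamma_i\to\Gamma_{i+1}$ folds and $h:\Gamma_{m+1}\to\Gamma$ a graph isomorphism. Stacks: $e\in\mathcal{E}\Gamma$ is mixing if $|f(e)|>1$; surplus if non-mixing and $f(e)\in\{f(u),\overline{f(u)}\}$ for some edge $u\notin\{e,\bar e\}$. Stacks are the classes of the equivalence relation on $\mathcal{E}\Gamma$ (unoriented edges) generated by $e\sim f(e)$ whenever $e$ is non-mixing and non-surplus (then $f(e)$ is a single edge). *)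

(* Defs.v *)
From mathcomp Require Import all_boot all_order all_algebra.
Set Implicit Arguments. Unset Strict Implicit. Unset Printing Implicit Defensive.
Import Order.TTheory GRing.Theory Num.Theory.

(* Vertices are 0..nV-1, positively oriented edges are 0..nE-1,
   edge x goes from ini x to ter x. *)
Record graph := Graph { nV : nat; nE : nat; ini : nat -> nat; ter : nat -> nat }.

Definition wf_graph (G : graph) : Prop :=
  forall x, x < nE G -> (ini G x < nV G) && (ter G x < nV G).

(* oriented edge: (x, true) = x, (x, false) = reverse of x *)
Definition oedge := (nat * bool)%type.
Definition orev (a : oedge) : oedge := (a.1, ~~ a.2).
Definition oini G (a : oedge) := if a.2 then ini G a.1 else ter G a.1.
Definition oter G (a : oedge) := if a.2 then ter G a.1 else ini G a.1.
Definition ovalid G (a : oedge) : bool := a.1 < nE G.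
Definition revp (s : seq oedge) : seq oedge := map orev (rev s).

Definition is_epath G (s : seq oedge) : bool :=
  if s is a :: s' then all (ovalid G) s && path (fun x y => oter G x == oini G y) a s'
  else false.

Definition vpath G (s : seq oedge) (u v : nat) : bool :=
  if s is a :: s' then [&& is_epath G s, oini G a == u & oter G (last a s') == v]
  else u == v.

Record gmap := GMap { mV : nat -> nat; mE : oedge -> seq oedge }.

Definition is_cmap G1 G2 (f : gmap) : Prop :=
  [/\ forall v, v < nV G1 -> mV f v < nV G2,
      forall a, ovalid G1 a -> vpath G2 (mE f a) (mV f (oini G1 a)) (mV f (oter G1 a))
    & forall x, x < nE G1 -> mE f (x, false) = revp (mE f (x, true))].

Definition is_gmap G1 G2 (f : gmap) : Prop :=
  is_cmap G1 G2 f /\ forall a, ovalid G1 a -> mE f a != [::].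

Definition mapP (f : gmap) (s : seq oedge) : seq oedge := flatten (map (mE f) s).
Definition gcomp (g f : gmap) : gmap := GMap (mV g \o mV f) (fun a => mapP g (mE f a)).
Definition gid : gmap := GMap id (fun a => [:: a]).

Definition geq G (f g : gmap) : Prop :=
  (forall v, v < nV G -> mV f v = mV g v) /\ forall a, ovalid G a -> mE f a = mE g a.

Definition bij_on (T1 T2 : eqType) (A : pred T1) (B : pred T2) (phi : T1 -> T2) : Prop :=
  [/\ forall x, A x -> B (phi x), {in A &, injective phi}
    & forall y, B y -> exists2 x, A x & phi x = y].

Definition is_giso G1 G2 (h : gmap) : Prop :=
  [/\ is_gmap G1 G2 h,
      bij_on [pred v | v < nV G1] [pred v | v < nV G2] (mV h),
      forall a, ovalid G1 a -> size (mE h a) = 1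
    & bij_on (ovalid G1) (ovalid G2) (fun a => head a (mE h a))].

Definition rpush (a : oedge) (r : seq oedge) : seq oedge :=
  if r is b :: r' then (if b == orev a then r' else a :: r) else [:: a].
(* free reduction: two paths with common endpoints are homotopic rel endpoints
   iff they have the same free reduction *)
Definition freduce (s : seq oedge) : seq oedge := foldr rpush [::] s.

(* f, g : G1 -> G2 are (freely) homotopic: vertex tracks gam v from f(v) to g(v)
   such that each edge square f(e) gam(tau e) ~ gam(iota e) g(e) commutes up to
   homotopy rel endpoints *)
Definition ghomotopic G1 G2 (f g : gmap) : Prop :=
  exists gam : nat -> seq oedge,
    (forall v, v < nV G1 -> vpath G2 (gam v) (mV f v) (mV g v)) /\
    (forall x, x < nE G1 ->
       freduce (mE f (x, true) ++ gam (ter G1 x)) = freduce (gam (ini G1 x) ++ mE g (x, true))).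

Definition homotopy_equiv G1 G2 (f : gmap) : Prop :=
  exists g, [/\ is_cmap G2 G1 g, ghomotopic G1 G1 (gcomp g f) gid
              & ghomotopic G2 G2 (gcomp f g) gid].

Definition trans_mx G (f : gmap) : 'M[int]_(nE G) :=
  \matrix_(i, j) Posz (count (fun a : oedge => a.1 == (j : nat)) (mE f ((i : nat), true))).

Definition irreducible_mx n (A : 'M[int]_n) : Prop :=
  forall i j, exists2 k, (0 < k)%N & (0 < (A ^+ k) i j)%R.

(* valence: number of oriented edges starting at v (loops count twice) *)
Definition valence G (v : nat) : nat :=
  \sum_(x < nE G) ((ini G x == v) + (ter G x == v)).

Definition irreducible_map G (f : gmap) : Prop :=
  irreducible_mx (trans_mx G f) /\ forall v, v < nV G -> 3 <= valence G v.

Definition expanding G (f : gmap) : Prop :=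
  forall x, x < nE G -> forall N, exists n0, forall n, n0 <= n ->
    N <= size (mE (iter n (gcomp f) gid) (x, true)).

Inductive fold_kind := CompleteF | ProperFullF | PartialF.
(* fold of fe1 over fe0 *)
Record fold_spec := FoldSpec { fkind : fold_kind; fe0 : oedge; fe1 : oedge }.

Definition fold_valid G (d : fold_spec) : bool :=
  [&& ovalid G (fe0 d), ovalid G (fe1 d), (fe0 d).1 != (fe1 d).1
    & oini G (fe0 d) == oini G (fe1 d)].

Definition upd (g : nat -> nat) (x y : nat) : nat -> nat :=
  fun z => if z == x then y else g z.

Definition set_oends G (a : oedge) (p q : nat) : graph :=
  if a.2 then Graph (nV G) (nE G) (upd (ini G) a.1 p) (upd (ter G) a.1 q)
  else Graph (nV G) (nE G) (upd (ini G) a.1 q) (upd (ter G) a.1 p).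

Definition oimg_pos (a : oedge) (s : seq oedge) : seq oedge :=
  if a.2 then s else revp s.
Definition mk_emap (pos : nat -> seq oedge) (a : oedge) : seq oedge :=
  if a.2 then pos a.1 else revp (pos a.1).

(* proper full fold of a1 over a0: a1 = a1'' a1', a1'' identified with a0;
   a1' keeps the name of a1. *)
Definition proper_full_fold G (a0 a1 : oedge) : graph * gmap :=
  (set_oends G a1 (oter G a0) (oter G a1),
   GMap id (mk_emap (fun x => if x == a1.1 then oimg_pos a1 [:: a0; a1] else [:: (x, true)]))).

(* partial fold: a0 = a0' a0'', a1 = a1'' a1', a1'' identified with a0'.
   New vertex w = nV G (the subdivision point), new edge y = nE G (a0', positively
   oriented); a0'' keeps the name of a0 and a1' keeps the name of a1. *)
Definition partial_fold G (a0 a1 : oedge) : graph * gmap :=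
  let w := nV G in let y := nE G in
  let Gext := Graph (nV G).+1 (nE G).+1 (upd (ini G) y (oini G a0)) (upd (ter G) y w) in
  (set_oends (set_oends Gext a0 w (oter G a0)) a1 w (oter G a1),
   GMap id (mk_emap (fun x => if x == a0.1 then oimg_pos a0 [:: (y, true); a0]
                         else if x == a1.1 then oimg_pos a1 [:: (y, true); a1]
                         else [:: (x, true)]))).

(* complete fold: a1 identified with a0 entirely (edge a1.1 deleted, the
   terminal vertex of a1 merged into that of a0; remaining edges and vertices
   renumbered consecutively). *)
Definition complete_fold G (a0 a1 : oedge) : graph * gmap :=
  let t := oter G a0 in let u := oter G a1 in let x1 := a1.1 in
  let rv := fun v => if u == t then v else
              let v' := if v == u then t else v in if v' < u then v' else v'.-1 in
  let nV' := if u == t then nV G else (nV G).-1 in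
  let re := fun x => if x < x1 then x else x.-1 in
  let orig := fun x' => if x' < x1 then x' else x'.+1 in
  (Graph nV' (nE G).-1 (fun x' => rv (ini G (orig x'))) (fun x' => rv (ter G (orig x'))),
   GMap rv (mk_emap (fun x => if x == x1 then oimg_pos a1 [:: (re a0.1, a0.2)]
                             else [:: (re x, true)]))).

Definition apply_fold G (d : fold_spec) : graph * gmap :=
  match fkind d with
  | CompleteF => complete_fold G (fe0 d) (fe1 d)
  | ProperFullF => proper_full_fold G (fe0 d) (fe1 d)
  | PartialF => partial_fold G (fe0 d) (fe1 d)
  end.

Fixpoint chain_valid G (ds : seq fold_spec) : bool :=
  if ds is d :: ds' then fold_valid G d && chain_valid (apply_fold G d).1 ds' else true.
Fixpoint chain_end G (ds : seq fold_spec) : graph :=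
  if ds is d :: ds' then chain_end (apply_fold G d).1 ds' else G.
Fixpoint chain_map G (ds : seq fold_spec) : gmap :=
  if ds is d :: ds' then gcomp (chain_map (apply_fold G d).1 ds') (apply_fold G d).2 else gid.

(* f = h o f_m o ... o f_1 with m = size ds *)
Definition fold_decomposition G (f : gmap) (ds : seq fold_spec) (h : gmap) : Prop :=
  [/\ chain_valid G ds, is_giso (chain_end G ds) G h & geq G f (gcomp h (chain_map G ds))].

Definition mixing (f : gmap) (x : nat) : bool := 1 < size (mE f (x, true)).
Definition surplus G (f : gmap) (x : nat) : bool :=
  ~~ mixing f x &&
  [exists u : 'I_(nE G), ((u : nat) != x) &&
     ((mE f (x, true) == mE f (u : nat, true)) || (mE f (x, true) == revp (mE f (u : nat, true))))].
(* e ~ f(e) for e non-mixing, non-surplus (then f(e) is a single edge) *)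
Definition stack_step G (f : gmap) (i j : 'I_(nE G)) : bool :=
  [&& ~~ mixing f i, ~~ surplus G f i & (head (0, true) (mE f (i : nat, true))).1 == j].
Definition stack_rel G (f : gmap) : rel 'I_(nE G) :=
  fun i j => stack_step f i j || stack_step f j i.
Definition num_stacks G (f : gmap) : nat :=
  #|[set [set j | connect (stack_rel f) i j] | i : 'I_(nE G)]|.

(* Main.v *)
Require Import Defs.
From mathcomp Require Import all_boot all_order all_algebra.
From mathcomp Require Import zify.
Import Defs.
Set Implicit Arguments. Unset Strict Implicit.

Lemma orevK a : orev (orev a) = a.
Proof. by case: a => x []. Qed.

Lemma revpK s : revp (revp s) = s.
Proof. rewrite /revp map_rev -map_comp -map_rev revK; elim: s => //= a s ->; by rewrite orevK. Qed.

Lemma revp_cat s t : revp (s ++ t) = revp t ++ revp s.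
Proof. by rewrite /revp rev_cat map_cat. Qed.

Lemma revp_cons a s : revp (a :: s) = revp s ++ [:: orev a].
Proof. by rewrite -cat1s revp_cat. Qed.

Lemma size_revp s : size (revp s) = size s.
Proof. by rewrite /revp size_map size_rev. Qed.

Lemma oini_rev G a : oini G (orev a) = oter G a.
Proof. by case: a => x []. Qed.
Lemma oter_rev G a : oter G (orev a) = oini G a.
Proof. by case: a => x []. Qed.
Lemma ovalid_rev G a : ovalid G (orev a) = ovalid G a.
Proof. by case: a. Qed.

Lemma all_revp (P : pred oedge) s : (forall a, P (orev a) = P a) -> all P (revp s) = all P s.
Proof. by move=> HP; rewrite /revp all_map all_rev; apply: eq_all => a /=. Qed.

Lemma oedge_eq1 (a c : oedge) : a.1 = c.1 -> a = c \/ a = orev c.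
Proof. by case: a c => x b [y d] /= ->; case: b; case: d; auto. Qed.

Definition fstE (s : seq oedge) := head (0, true) s.
Definition lstE (s : seq oedge) := last (0, true) s.

Lemma fstE_cat s t : s != [::] -> fstE (s ++ t) = fstE s.
Proof. by case: s. Qed.
Lemma lstE_cat s t : t != [::] -> lstE (s ++ t) = lstE t.
Proof. by case: t => // b t _; rewrite /lstE last_cat. Qed.

Lemma fstE_revp s : s != [::] -> fstE (revp s) = orev (lstE s).
Proof.
case/lastP: s => // s b _; by rewrite /revp /fstE /lstE rev_rcons last_rcons.
Qed.
Lemma lstE_revp s : s != [::] -> lstE (revp s) = orev (fstE s).
Proof.
case: s => // b s _; by rewrite /revp /fstE /lstE rev_cons map_rcons last_rcons.
Qed.

Lemma mapP_cat f s t : mapP f (s ++ t) = mapP f s ++ mapP f t.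
Proof. by rewrite /mapP map_cat flatten_cat. Qed.
Lemma mapP_cons f a s : mapP f (a :: s) = mE f a ++ mapP f s.
Proof. by []. Qed.
Lemma mapP1 f a : mapP f [:: a] = mE f a.
Proof. by rewrite mapP_cons cats0. Qed.
Lemma mapP_comp g f s : mapP (gcomp g f) s = mapP g (mapP f s).
Proof. elim: s => //= a s IH; by rewrite !mapP_cons IH mapP_cat. Qed.

Lemma mapP_nil f s : (forall a, mE f a != [::]) -> (mapP f s == [::]) = (s == [::]).
Proof. move=> Hf; case: s => //= a s; rewrite mapP_cons; by case: (mE f a) (Hf a). Qed.

Lemma fstE_mapP f s : (forall a, mE f a != [::]) -> s != [::] -> fstE (mapP f s) = fstE (mE f (fstE s)).
Proof. move=> Hf; case: s => // a s _; by rewrite mapP_cons fstE_cat. Qed.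

Lemma lstE_mapP f s : (forall a, mE f a != [::]) -> s != [::] -> lstE (mapP f s) = lstE (mE f (lstE s)).
Proof.
move=> Hf; elim: s => // a s IH _; rewrite mapP_cons.
case: s IH => [|b s] IH; first by rewrite cats0.
rewrite lstE_cat ?mapP_nil // IH //.
Qed.

Lemma all_mapP f (P Q : pred oedge) s : (forall a, P a -> all Q (mE f a)) -> all P s -> all Q (mapP f s).
Proof. move=> H; elim: s => //= a s IH /andP[Pa Ps]; by rewrite mapP_cons all_cat H ?IH. Qed.

Lemma has_mapP f (p : pred oedge) s : has p (mapP f s) = has (fun a => has p (mE f a)) s.
Proof. elim: s => //= a s IH; by rewrite mapP_cons has_cat IH. Qed.

Lemma mapP_revp f (P : pred oedge) s :
  (forall a, P a -> mE f (orev a) = revp (mE f a)) -> all P s -> mapP f (revp s) = revp (mapP f s).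
Proof.
move=> H; elim: s => // a s IH /andP[Pa Ps].
by rewrite revp_cons mapP_cat mapP1 H // IH // mapP_cons revp_cat.
Qed.

Lemma mk_emap_rev pos a : mk_emap pos (orev a) = revp (mk_emap pos a).
Proof. by case: a => x []; rewrite /mk_emap /= ?revpK. Qed.

Lemma oimg_posE (c : oedge) s (b : bool) :
  (if b then oimg_pos c s else revp (oimg_pos c s)) = if b == c.2 then s else revp s.
Proof. by case: b; case: c => x []; rewrite /oimg_pos /= ?revpK. Qed.

Lemma upd_eq g x y : upd g x y x = y.
Proof. by rewrite /upd eqxx. Qed.
Lemma upd_ne g x y z : z != x -> upd g x y z = g z.
Proof. by rewrite /upd => /negbTE ->. Qed.

Lemma so_nV G c p q : nV (set_oends G c p q) = nV G.
Proof. by rewrite /set_oends; case: ifP. Qed.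
Lemma so_nE G c p q : nE (set_oends G c p q) = nE G.
Proof. by rewrite /set_oends; case: ifP. Qed.
Lemma so_ini_c G c p q : oini (set_oends G c p q) c = p.
Proof. by case: c => x []; rewrite /set_oends /oini /= upd_eq. Qed.
Lemma so_ter_c G c p q : oter (set_oends G c p q) c = q.
Proof. by case: c => x []; rewrite /set_oends /oter /= upd_eq. Qed.
Lemma so_ini_o G c p q a : a.1 != c.1 -> oini (set_oends G c p q) a = oini G a.
Proof. by case: c => x []; case: a => z [] /= H; rewrite /set_oends /oini /= upd_ne. Qed.
Lemma so_ter_o G c p q a : a.1 != c.1 -> oter (set_oends G c p q) a = oter G a.
Proof. by case: c => x []; case: a => z [] /= H; rewrite /set_oends /oter /= upd_ne. Qed.
Lemma so_valid G c p q a : ovalid (set_oends G c p q) a = ovalid G a.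
Proof. by rewrite /ovalid so_nE. Qed.

Set Default Proof Using "All".

Definition ends_ok G G1 (phi : gmap) a :=
  (oini G1 (fstE (mE phi a)) = mV phi (oini G a)) /\ (oter G1 (lstE (mE phi a)) = mV phi (oter G a)).

Lemma ends_rev G G1 phi a : mE phi (orev a) = revp (mE phi a) -> mE phi a != [::] ->
  ends_ok G G1 phi a -> ends_ok G G1 phi (orev a).
Proof.
move=> Hr Hn [H1 H2]; rewrite /ends_ok Hr fstE_revp // lstE_revp //.
by rewrite oini_rev oter_rev oini_rev oter_rev.
Qed.

Definition fold_good G G1 (phi : gmap) :=
  [/\ forall a, mE phi a != [::],
      forall a, mE phi (orev a) = revp (mE phi a),
      forall a, ovalid G a -> all (ovalid G1) (mE phi a)
    & forall a, ovalid G a -> ends_ok G G1 phi a].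

Lemma ends_by_c G G1 phi c :
  (forall a, mE phi (orev a) = revp (mE phi a)) -> mE phi c != [::] ->
  ends_ok G G1 phi c -> forall a, a.1 = c.1 -> ends_ok G G1 phi a.
Proof. move=> Hr Hn Hc a /oedge_eq1 [->|->] //; exact: ends_rev. Qed.

Section ProperFull.
Variables (G : graph) (a0 a1 : oedge).
Hypotheses (h0 : ovalid G a0) (h1 : ovalid G a1) (hne : a0.1 != a1.1) (hini : oini G a0 = oini G a1).
Let G1 := (proper_full_fold G a0 a1).1.
Let phi := (proper_full_fold G a0 a1).2.

Lemma pf_E a : mE phi a = if a.1 == a1.1 then (if a.2 == a1.2 then [:: a0; a1] else revp [:: a0; a1]) else [:: a].
Proof.
case: a => x b; rewrite /phi /= /mk_emap /=.
have [e|ne] := eqVneq x a1.1; first by rewrite oimg_posE.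
by case: b.
Qed.

Lemma pf_V v : mV phi v = v. Proof. by []. Qed.
Lemma pf_nV : nV G1 = nV G. Proof. exact: so_nV. Qed.
Lemma pf_nE : nE G1 = nE G. Proof. exact: so_nE. Qed.

Lemma pf_good : fold_good G G1 phi.
Proof.
have Hr : forall a, mE phi (orev a) = revp (mE phi a) by move=> a; exact: mk_emap_rev.
have Hn : forall a, mE phi a != [::].
  by move=> a; rewrite pf_E; case: ifP => _; [case: ifP|].
split => //.
- move=> a Ha; have HV : ovalid G1 =1 ovalid G by move=> c; exact: so_valid.
  rewrite pf_E (eq_all HV).
  case: ifP => _; [case: ifP => _|] => /=; rewrite ?h0 ?h1 ?Ha //.
  by rewrite !ovalid_rev h0 h1.
- move=> a Ha; case: (boolP (a.1 == a1.1)) => [/eqP e|ne].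
  + apply: (ends_by_c Hr (Hn a1) _ e); rewrite /ends_ok pf_E eqxx eqxx /=.
    rewrite /fstE /lstE /= /G1 /= so_ter_c so_ini_o //.
  + rewrite /ends_ok pf_E (negbTE ne) /fstE /lstE /= /G1 /= so_ini_o // so_ter_o //.
Qed.

Lemma pf_size a : size (mE phi a) = 1 + (a.1 == a1.1).
Proof. rewrite pf_E; case: ifP => _ //; case: ifP => _ //; by rewrite size_revp. Qed.

Lemma pf_inj a b : size (mE phi a) = 1 -> mE phi a = mE phi b -> a = b.
Proof.
move=> Hs Heq; move: Hs; rewrite pf_size; case Ea: (a.1 == a1.1) => // _.
move/(congr1 size): (Heq); rewrite !pf_size Ea; case Eb: (b.1 == a1.1) => // _.
by move: Heq; rewrite !pf_E Ea Eb; case.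
Qed.

Lemma pf_cover b : has (fun c => c.1 == b.1) (mE phi b).
Proof.
rewrite pf_E; case: ifP => /eqP e; last by rewrite /= eqxx.
case: ifP => _; first by rewrite /= e eqxx orbT.
by rewrite /revp /= e eqxx.
Qed.
End ProperFull.

Section Partial.
Variables (G : graph) (a0 a1 : oedge).
Hypotheses (h0 : ovalid G a0) (h1 : ovalid G a1) (hne : a0.1 != a1.1) (hini : oini G a0 = oini G a1).
Let G1 := (partial_fold G a0 a1).1.
Let phi := (partial_fold G a0 a1).2.
Let y := nE G.
Let Gext := Graph (nV G).+1 (nE G).+1 (upd (ini G) y (oini G a0)) (upd (ter G) y (nV G)).

Lemma pa_E a : mE phi a =
  if a.1 == a0.1 then (if a.2 == a0.2 then [:: (y, true); a0] else revp [:: (y, true); a0])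
  else if a.1 == a1.1 then (if a.2 == a1.2 then [:: (y, true); a1] else revp [:: (y, true); a1])
  else [:: a].
Proof.
case: a => x b; rewrite /phi /= /mk_emap /=.
have [e|ne] := eqVneq x a0.1; first by rewrite oimg_posE.
have [e|ne'] := eqVneq x a1.1; first by rewrite oimg_posE.
by case: b.
Qed.

Lemma pa_nV : nV G1 = (nV G).+1. Proof. by rewrite /G1 /= !so_nV. Qed.
Lemma pa_nE : nE G1 = (nE G).+1. Proof. by rewrite /G1 /= !so_nE. Qed.

Lemma pa_size a : size (mE phi a) = 1 + (a.1 == a0.1) + (a.1 == a1.1).
Proof.
rewrite pa_E; case: ifP => [/eqP e|_].
  have -> : (a.1 == a1.1) = false by rewrite e (negbTE hne).
  by case: ifP => _ //; rewrite size_revp.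
by case: ifP => _ //; case: ifP => _ //; rewrite size_revp.
Qed.

Lemma pa_inj a b : size (mE phi a) = 1 -> mE phi a = mE phi b -> a = b.
Proof.
move=> Hs Heq; move: Hs; rewrite pa_size; case Ea: (a.1 == a0.1) => //; case Ea': (a.1 == a1.1) => // _.
move/(congr1 size): (Heq); rewrite !pa_size Ea Ea'; case Eb: (b.1 == a0.1) => //; case Eb': (b.1 == a1.1) => // _.
by move: Heq; rewrite !pa_E Ea Ea' Eb Eb'; case.
Qed.

Lemma pa_cover b : has (fun c => c.1 == b.1) (mE phi b).
Proof.
rewrite pa_E; case: ifP => /eqP e.
  by case: ifP => _; rewrite /= ?e eqxx ?orbT.
case: ifP => /eqP e'; last by rewrite /= eqxx.
by case: ifP => _; rewrite /= ?e' eqxx ?orbT.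
Qed.

Lemma pa_cover_y b : b.1 = a0.1 -> has (fun c => c.1 == y) (mE phi b).
Proof. move=> e; rewrite pa_E e eqxx; by case: ifP => _; rewrite /= eqxx ?orbT. Qed.

Lemma pa_good : fold_good G G1 phi.
Proof.
have Hr : forall a, mE phi (orev a) = revp (mE phi a) by move=> a; exact: mk_emap_rev.
have Hn : forall a, mE phi a != [::].
  by move=> a; rewrite pa_E; case: ifP => _; [case: ifP|case: ifP => _; [case: ifP|]].
have lt0 : a0.1 < y by [].
have lt1 : a1.1 < y by [].
have HV : forall c, ovalid G1 c = (c.1 < (nE G).+1).
  by move=> c; rewrite /G1 /= /ovalid !so_nE.
split => //.
- move=> a Ha; rewrite pa_E.
  have Hv : forall c, ovalid G c -> ovalid G1 c.
    by move=> c; rewrite HV /ovalid => /ltnW; rewrite ltnS.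
  case: ifP => _; [case: ifP => _|case: ifP => _; [case: ifP => _|]];
   rewrite ?all_revp ?ovalid_rev //= ?HV ?ltnSn //= ?Hv //; by rewrite -HV Hv.
- have ny0 : y != a0.1 by rewrite neq_ltn lt0 orbT.
  have ny1 : y != a1.1 by rewrite neq_ltn lt1 orbT.
  have Ey : oini G1 (y, true) = oini G a0.
    by rewrite /G1 /= so_ini_o // so_ini_o // /oini /= upd_eq.
  move=> a Ha; case: (boolP (a.1 == a0.1)) => [/eqP e|ne0].
    apply: (ends_by_c Hr (Hn a0) _ e); rewrite /ends_ok pa_E eqxx eqxx /=.
    rewrite /fstE /lstE /= Ey; split => //.
    by rewrite /G1 /= so_ter_o // so_ter_c.
  case: (boolP (a.1 == a1.1)) => [/eqP e|ne1].
    have hne2 : (a1.1 == a0.1) = false by rewrite eq_sym (negbTE hne).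
    apply: (ends_by_c Hr (Hn a1) _ e); rewrite /ends_ok pa_E hne2 !eqxx /=.
    rewrite /fstE /lstE /= Ey; split => //.
    by rewrite /G1 /= so_ter_c.
  have nay : a.1 != y by rewrite neq_ltn; move: Ha; rewrite /ovalid => ->.
  rewrite /ends_ok pa_E (negbTE ne0) (negbTE ne1) /fstE /lstE /= /G1 /=.
  rewrite !so_ini_o // !so_ter_o //.
  by case: a Ha nay {ne0 ne1} => x [] _ nay; rewrite /oini /oter /= !upd_ne.
Qed.
End Partial.

Section Complete.
Variables (G : graph) (a0 a1 : oedge).
Hypotheses (h0 : ovalid G a0) (h1 : ovalid G a1) (hne : a0.1 != a1.1) (hini : oini G a0 = oini G a1).
Let G1 := (complete_fold G a0 a1).1.
Let phi := (complete_fold G a0 a1).2.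
Let x1 := a1.1.
Let re := fun x => if x < x1 then x else x.-1.
Let orig := fun x' => if x' < x1 then x' else x'.+1.

Lemma cf_E a : mE phi a =
  if a.1 == x1 then (if a.2 == a1.2 then [:: (re a0.1, a0.2)] else [:: (re a0.1, ~~ a0.2)])
  else [:: (re a.1, a.2)].
Proof.
case: a => x b; rewrite /phi /= /mk_emap /=.
have [e|ne] := eqVneq x a1.1; first by rewrite oimg_posE.
by case: b.
Qed.

Lemma cf_size a : size (mE phi a) = 1.
Proof. by rewrite cf_E; case: ifP => _ //; case: ifP. Qed.

Lemma orig_re x : x != x1 -> orig (re x) = x.
Proof. rewrite /orig /re => ne; case: (ltnP x x1) => H1; first by rewrite H1. case: ltnP; lia. Qed.
Lemma re_orig x : re (orig x) = x.
Proof. rewrite /orig /re; case: (ltnP x x1) => H1; first by rewrite H1. case: ltnP; lia. Qed.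
Lemma orig_ne x : orig x != x1.
Proof. rewrite /orig; case: ltnP => H; lia. Qed.

Lemma cf_nE : (nE G1).+1 = nE G.
Proof. rewrite /G1 /=; move: h1; rewrite /ovalid; lia. Qed.
Lemma cf_nV : nV G <= nV G1 + (oter G a0 != oter G a1).
Proof. rewrite /G1 /= eq_sym; case: eqP => _ /=; lia. Qed.

Lemma cf_V : mV phi (oter G a0) = mV phi (oter G a1).
Proof. rewrite /phi /=; case: eqP => // ne; rewrite eqxx; case: eqP => // e; by rewrite e in ne. Qed.

Lemma cf_ini1 r b : oini G1 (r, b) = mV phi (oini G (orig r, b)).
Proof. by case: b. Qed.
Lemma cf_ter1 r b : oter G1 (r, b) = mV phi (oter G (orig r, b)).
Proof. by case: b. Qed.

Lemma cf_good : fold_good G G1 phi.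
Proof.
have Hr : forall a, mE phi (orev a) = revp (mE phi a) by move=> a; exact: mk_emap_rev.
have Hn : forall a, mE phi a != [::] by move=> a; rewrite -size_eq0 cf_size.
have a0x : a0.1 != x1 by [].
split => //.
- move=> a Ha; rewrite cf_E.
  have Hlt : forall x, x < nE G -> x != x1 -> re x < nE G1.
    move=> x Hx nx; rewrite /G1 /= /re; move: h1 nx; rewrite /ovalid -/x1; case: (ltnP x x1); lia.
  by case: ifP => [_|/negbT ne]; [case: ifP => _|]; rewrite /= andbT /ovalid /= Hlt.
- move=> a Ha; case: (boolP (a.1 == x1)) => [/eqP e|ne].
    apply: (ends_by_c Hr (Hn a1) _ e); rewrite /ends_ok cf_E !eqxx /fstE /lstE [head _ _]/= [last _ _]/=.
    by rewrite cf_ini1 cf_ter1 orig_re // -!surjective_pairing -cf_V -hini.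
  rewrite /ends_ok cf_E (negbTE ne) /fstE /lstE [head _ _]/= [last _ _]/= cf_ini1 cf_ter1 orig_re //.
Qed.

Lemma cf_coll a b : a != b -> mE phi a = mE phi b ->
  (a.1 = a0.1 /\ b.1 = a1.1) \/ (a.1 = a1.1 /\ b.1 = a0.1).
Proof.
have a0x : a0.1 != x1 by [].
move=> nab; rewrite !cf_E.
case: (boolP (a.1 == x1)) => [/eqP ea|na]; case: (boolP (b.1 == x1)) => [/eqP eb|nb].
- move: nab; case: a b ea eb => x c [z d] /= -> -> nab E.
  move: nab; move/(congr1 (fun s => (head (0,true) s).2)): E.
  by case: c; case: d; case: (a1.2); case: (a0.2); rewrite /= ?eqxx.
- move=> E; right; split => //; apply/esym.
  have : re b.1 = re a0.1 by move: E; case: ifP => _ [].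
  by move/(congr1 orig); rewrite !orig_re.
- move=> E; left; split => //.
  have : re a.1 = re a0.1 by move: E; case: ifP => _ [].
  by move/(congr1 orig); rewrite !orig_re.
- case=> E1 E2; have E3 : a.1 = b.1 by rewrite -(orig_re na) E1 orig_re.
  by move: nab; case: a b E2 E3 {na nb E1} => x c [z d] /= -> ->; rewrite eqxx.
Qed.

Lemma cf_cover x' b : b.1 = orig x' -> has (fun c => c.1 == x') (mE phi b).
Proof. move=> e; rewrite cf_E e (negbTE (orig_ne x')) /= re_orig eqxx //. Qed.
Lemma cf_orig_lt x' : x' < nE G1 -> orig x' < nE G.
Proof. rewrite -cf_nE /orig; case: (ltnP x' x1); lia. Qed.
End Complete.

Lemma fold_goodP G d : fold_valid G d -> fold_good G (apply_fold G d).1 (apply_fold G d).2.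
Proof.
case: d => k a0 a1; rewrite /fold_valid /= => /and4P[h0 h1 hne /eqP hini].
rewrite /apply_fold /=; case: k.
- exact: cf_good.
- exact: pf_good.
- exact: pa_good.
Qed.

Fixpoint cnt (k : graph -> fold_spec -> nat) G ds :=
  if ds is d :: ds' then k G d + cnt k (apply_fold G d).1 ds' else 0.

Definition kpf (G : graph) d := if fkind d is ProperFullF then 1 else 0.
Definition kpa (G : graph) d := if fkind d is PartialF then 1 else 0.
Definition kcm G d := if fkind d is CompleteF then nat_of_bool (oter G (fe0 d) != oter G (fe1 d)) else 0.
Definition kcn G d := if fkind d is CompleteF then nat_of_bool (oter G (fe0 d) == oter G (fe1 d)) else 0.
Definition kw G d := kpf G d + 2 * kpa G d + 2 * kcn G d.

Lemma cnt_size G ds : size ds = cnt kpf G ds + cnt kpa G ds + cnt kcm G ds + cnt kcn G ds.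
Proof.
elim: ds G => //= d ds IH G; rewrite (IH (apply_fold G d).1).
rewrite /kpf /kpa /kcm /kcn; case: (fkind d) => //=; case: (oter G (fe0 d) == oter G (fe1 d)) => /=; lia.
Qed.

Lemma cnt_w G ds : cnt kw G ds = cnt kpf G ds + 2 * cnt kpa G ds + 2 * cnt kcn G ds.
Proof. elim: ds G => //= d ds IH G; rewrite IH /kw; lia. Qed.

Lemma cnt_graph G ds : chain_valid G ds ->
  nV G + cnt kpa G ds <= nV (chain_end G ds) + cnt kcm G ds /\
  nE (chain_end G ds) + cnt kcm G ds + cnt kcn G ds = nE G + cnt kpa G ds.
Proof.
elim: ds G => /= [|d ds IH] G; first by rewrite !addn0.
move=> /andP[Hd /IH [IH1 IH2]]; move: Hd IH1 IH2.
case: d => k a0 a1; rewrite /fold_valid /= => /and4P[h0 h1 hne /eqP hini].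
rewrite /apply_fold /kpa /kcm /kcn /=; case: k => /=.
- move: (cf_nE h0 h1 hne hini) (cf_nV h0 h1 hne hini).
  case: (oter G a0 == oter G a1) => /=; lia.
- rewrite /proper_full_fold /= so_nV so_nE; lia.
- rewrite (pa_nV h0 h1 hne hini) (pa_nE h0 h1 hne hini); lia.
Qed.

Definition covering G n (Q : nat -> seq oedge) :=
  forall x, x < nE G -> exists2 i, i < n & has (fun a : oedge => a.1 == x) (Q i).

Lemma size_mapP_ge phi (p0 p1 : pred oedge) s :
  (forall a, 1 + p0 a + p1 a <= size (mE phi a)) ->
  size s + count p0 s + count p1 s <= size (mapP phi s).
Proof.
move=> H; elim: s => //= a s IH; rewrite mapP_cons size_cat.
have := H a; lia.
Qed.

Definition sumI n (F : nat -> nat) := \sum_(i < n) F i.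

Lemma sum_ge n (F : nat -> nat) i : i < n -> F i <= sumI n F.
Proof. move=> Hi; by rewrite /sumI (bigD1 (Ordinal Hi)) //= leq_addr. Qed.

Lemma sum_bound n Q phi (p0 p1 : pred oedge) :
  (forall a, 1 + p0 a + p1 a <= size (mE phi a)) ->
  sumI n (fun i => size (Q i)) + sumI n (fun i => count p0 (Q i)) + sumI n (fun i => count p1 (Q i))
   <= sumI n (fun i => size (mapP phi (Q i))).
Proof. move=> H; rewrite /sumI -!big_split /=; apply: leq_sum => i _; exact: size_mapP_ge. Qed.

Lemma cover_count G n Q (p : pred oedge) x : covering G n Q -> x < nE G ->
  (forall a : oedge, a.1 == x -> p a) -> 1 <= sumI n (fun i => count p (Q i)).
Proof.
move=> HC Hx Hp; case: (HC x Hx) => i Hi Hh.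
apply: leq_trans (sum_ge (fun i => count p (Q i)) Hi).
by rewrite -has_count; apply: sub_has Hh.
Qed.

Lemma cover_map G G1 n Q phi : covering G n Q ->
  (forall x, x < nE G1 -> exists2 x0, x0 < nE G &
       forall b : oedge, b.1 = x0 -> has (fun c : oedge => c.1 == x) (mE phi b)) ->
  covering G1 n (fun i => mapP phi (Q i)).
Proof.
move=> HC H x Hx; case: (H x Hx) => x0 Hx0 Hb; case: (HC x0 Hx0) => i Hi Hh.
exists i => //; rewrite has_mapP; apply: sub_has Hh => b /eqP; exact: Hb.
Qed.

Lemma S_fold G d n Q : fold_valid G d -> covering G n Q ->
  sumI n (fun i => size (Q i)) + nE (apply_fold G d).1 + 1 <=
     sumI n (fun i => size (mapP (apply_fold G d).2 (Q i))) + nE G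
  /\ covering (apply_fold G d).1 n (fun i => mapP (apply_fold G d).2 (Q i)).
Proof.
case: d => k a0 a1; rewrite /fold_valid /= => /and4P[h0 h1 hne /eqP hini] HC.
rewrite /apply_fold /=; case: k.
- split.
    have := @sum_bound n Q (complete_fold G a0 a1).2 pred0 pred0 (fun a => ltac:(by rewrite (cf_size h0 h1 hne hini a))).
    have := cf_nE h0 h1 hne hini; lia.
  eapply cover_map; first exact: HC; move=> x Hx.
  exists (if x < a1.1 then x else x.+1); first exact: (cf_orig_lt h0 h1 hne hini).
  move=> b; exact: (cf_cover h0 h1 hne hini).
- split.
    have := @sum_bound n Q (proper_full_fold G a0 a1).2 (fun a : oedge => a.1 == a1.1) pred0
              (fun a => ltac:(by rewrite /= addn0 (pf_size h0 h1 hne hini a))).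
    have := @cover_count G n Q (fun a : oedge => a.1 == a1.1) a1.1 HC h1 (fun a H => H).
    rewrite /proper_full_fold /= so_nE; lia.
  eapply cover_map; first exact: HC; move=> x; rewrite /proper_full_fold /= so_nE => Hx.
  exists x => // b <-; exact: (pf_cover h0 h1 hne hini).
- split.
    have := @sum_bound n Q (partial_fold G a0 a1).2 (fun a : oedge => a.1 == a0.1) (fun a : oedge => a.1 == a1.1)
              (fun a => ltac:(by rewrite (pa_size h0 h1 hne hini a))).
    have := @cover_count G n Q (fun a : oedge => a.1 == a0.1) a0.1 HC h0 (fun a H => H).
    have := @cover_count G n Q (fun a : oedge => a.1 == a1.1) a1.1 HC h1 (fun a H => H).
    rewrite (pa_nE h0 h1 hne hini); lia.
  eapply cover_map; first exact: HC; move=> x; rewrite (pa_nE h0 h1 hne hini) ltnS leq_eqVlt => /orP[/eqP ->|Hx].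
    exists a0.1 => // b; exact: (pa_cover_y h0 h1 hne hini).
  exists x => // b <-; exact: (pa_cover h0 h1 hne hini).
Qed.

Lemma S_chain G ds n Q : chain_valid G ds -> covering G n Q ->
  sumI n (fun i => size (Q i)) + nE (chain_end G ds) + size ds <=
     sumI n (fun i => size (mapP (chain_map G ds) (Q i))) + nE G.
Proof.
elim: ds G Q => /= [|d ds IH] G Q.
  move=> _ _; rewrite addn0 leq_add2r /sumI; apply: leq_sum => i _.
  by rewrite /mapP /= flatten_seq1 ?leqnn // map_id.
move=> /andP[Hd Hc] HC; case: (S_fold Hd HC) => H1 H2.
have := IH _ _ Hc H2.
have -> : sumI n (fun i => size (mapP (gcomp (chain_map (apply_fold G d).1 ds) (apply_fold G d).2) (Q i))) =
  sumI n (fun i => size (mapP (chain_map (apply_fold G d).1 ds) (mapP (apply_fold G d).2 (Q i)))).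
  by rewrite /sumI; apply: eq_bigr => i _; rewrite mapP_comp.
lia.
Qed.

Definition Dset n (Q : nat -> seq oedge) : {set 'I_n} :=
  [set i : 'I_n | (1 < size (Q i)) ||
     [exists u : 'I_n, (u != i) && ((Q i == Q u) || (Q i == revp (Q u)))]].
Definition Sset n (Q : nat -> seq oedge) (c : oedge) : {set 'I_n} :=
  [set i : 'I_n | (i \notin Dset n Q) && ((Q i == [:: c]) || (Q i == [:: orev c]))].

Lemma Dset_ext n Q1 Q2 : (forall j, Q1 j = Q2 j) -> Dset n Q1 = Dset n Q2.
Proof.
move=> H; apply/setP => i; rewrite !inE H; congr orb; apply: eq_existsb => u; by rewrite !H.
Qed.

Lemma Sset_le1 n Q c : #|Sset n Q c| <= 1.
Proof.
rewrite leqNgt; apply/negP => /card_gt1P [i [j [Hi Hj nij]]].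
move: Hi Hj; rewrite /Sset !inE => /andP[ni Hi] /andP[nj Hj].
move/negP: ni; apply; apply/orP; right; apply/existsP; exists j.
rewrite eq_sym nij /=.
by case/orP: Hi => /eqP ->; case/orP: Hj => /eqP ->; rewrite /revp /= ?orevK eqxx ?orbT.
Qed.

Lemma Sset_in n Q c (i : 'I_n) a : i \notin Dset n Q -> Q i = [:: a] -> a.1 = c.1 -> i \in Sset n Q c.
Proof. move=> Hout Ea e; rewrite inE Hout Ea /=; by case: (oedge_eq1 e) => ->; rewrite eqxx ?orbT. Qed.

Lemma card_sub3 (T : finType) (A B C D : {set T}) :
  D \subset A :|: (B :|: C) -> #|D| <= #|A| + #|B| + #|C|.
Proof.
move=> /subset_leq_card H; apply: leq_trans H _.
apply: leq_trans (leq_addr #|A :&: (B :|: C)| _) _; rewrite cardsUI -addnA leq_add2l.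
by apply: leq_trans (leq_addr #|B :&: C| _) _; rewrite cardsUI.
Qed.

Lemma size_mapP_ge1 phi s : (forall a, mE phi a != [::]) -> size s <= size (mapP phi s).
Proof.
move=> H; elim: s => //= a s IH; rewrite mapP_cons size_cat.
by rewrite -add1n leq_add // lt0n size_eq0 H.
Qed.

Lemma new_elt n (Q : nat -> seq oedge) phi (i : 'I_n) :
  (forall a, mE phi a != [::]) -> (forall a, mE phi (orev a) = revp (mE phi a)) ->
  (forall u : 'I_n, Q u != [::]) ->
  i \in Dset n (fun j => mapP phi (Q j)) -> i \notin Dset n Q ->
  exists2 a, Q i = [:: a] &
   (1 < size (mE phi a)) \/
   (size (mE phi a) = 1 /\ exists u : 'I_n, exists b,
      [/\ u != i, (Q u = [:: b]) \/ (Q u = [:: orev b]), a != b & mE phi a = mE phi b]).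
Proof.
move=> Hn Hr HQ Hin Hout.
have [a Ea] : exists a, Q i = [:: a].
  move: Hout (HQ i); rewrite inE negb_or => /andP[Hs _].
  case: (Q i) Hs => [|a [|b s]] //= _ _; by exists a.
exists a => //.
case: (ltnP 1 (size (mE phi a))) => Hsz; first by left.
right; have Hs1 : size (mE phi a) = 1 by apply/eqP; rewrite eqn_leq Hsz lt0n size_eq0 Hn.
split => //.
move: Hin; rewrite inE Ea mapP1 ltnNge Hsz /= => /existsP[u /andP[nui H]].
move: Hout; rewrite inE negb_or => /andP[_ /existsPn /(_ u)]; rewrite nui Ea /= negb_or => /andP[n1 n2].
have Hsu : size (mapP phi (Q u)) = 1.
  by case/orP: H => /eqP H; [rewrite -H | rewrite -size_revp -H].
have [b0 Eb0] : exists b0, Q u = [:: b0].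
  have := size_mapP_ge1 (Q u) Hn; have := HQ u; rewrite -size_eq0 Hsu.
  case: (Q u) => [|b0 [|c s]] //= _ _; by exists b0.
rewrite Eb0 mapP1 in H n1 n2.
case/orP: H => /eqP H.
  exists u, b0; split => //; [by left | by apply: contra n1 => /eqP ->].
exists u, (orev b0); split => //; [by right; rewrite orevK | | by rewrite Hr].
by apply: contra n2 => /eqP ->.
Qed.

Definition hypQ G n (Q : nat -> seq oedge) (al be : nat -> nat) :=
  forall j : 'I_n, [/\ Q j != [::], all (ovalid G) (Q j), oini G (fstE (Q j)) = al j
                     & oter G (lstE (Q j)) = be j].
Definition Inj (V : nat -> nat) n (al be : nat -> nat) :=
  forall (i j : 'I_n) v1 v2, (v1 == al i) || (v1 == be i) -> (v2 == al j) || (v2 == be j) ->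
    V v1 = V v2 -> v1 = v2.

Lemma end_in G n Q al be (j : 'I_n) c e : hypQ G n Q al be -> Q j = [:: c] -> c.1 = e.1 ->
  (oter G e == al j) || (oter G e == be j).
Proof.
move=> H Ej ce; have [_ _ Ha Hb] := H j; rewrite Ej /fstE /lstE /= in Ha Hb.
case: (oedge_eq1 ce) => E; rewrite E in Ha Hb.
  by rewrite Hb eqxx orbT.
by rewrite oini_rev in Ha; rewrite Ha eqxx.
Qed.

Lemma D_fold G d (rest : gmap) n Q al be : fold_valid G d -> hypQ G n Q al be ->
  Inj (fun v => mV rest (mV (apply_fold G d).2 v)) n al be ->
  #|Dset n (fun j => mapP (apply_fold G d).2 (Q j))| <= #|Dset n Q| + kw G d.
Proof.
move=> Hv HQ HI; have [Hn Hr _ _] := fold_goodP Hv.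
have HQn : forall u : 'I_n, Q u != [::] by move=> u; case: (HQ u).
have key := fun i => new_elt Hn Hr HQn (i:=i).
move: Hn Hr HI key; case: d Hv => k a0 a1; rewrite /fold_valid /= => /and4P[h0 h1 hne /eqP hini].
rewrite /apply_fold /kw /kpf /kpa /kcn /=; case: k => Hn Hr HI key.
-
  case E: (oter G a0 == oter G a1) => /=.
  + apply: leq_trans (card_sub3 (A := Dset n Q) (B := Sset n Q a0) (C := Sset n Q a1) _) _; last first.
      by rewrite -addnA leq_add2l; apply: leq_trans (leq_add (Sset_le1 n Q a0) (Sset_le1 n Q a1)) _.
    apply/subsetP => i Hi; rewrite !in_setU; case: (boolP (i \in Dset n Q)) => //= Hout.
    have [a Ea [H|[_ [u [b [_ _ nab Hab]]]]]] := key i Hi Hout.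
      by rewrite (cf_size h0 h1 hne hini) in H.
    case: (cf_coll h0 h1 hne hini nab Hab) => [[e _]|[e _]].
      by rewrite (Sset_in Hout Ea e).
    by rewrite (Sset_in Hout Ea e) orbT.
  + apply: leq_trans (card_sub3 (A := Dset n Q) (B := set0) (C := set0) _) _; last by rewrite cards0 -!addnA leq_add2l.
    apply/subsetP => i Hi; rewrite !in_setU !in_set0 !orbF; case: (boolP (i \in Dset n Q)) => //= Hout.
    have [a Ea [H|[_ [u [b [_ Hu nab Hab]]]]]] := key i Hi Hout.
      by rewrite (cf_size h0 h1 hne hini) in H.
    have [b' [Eb' eb']] : exists b', Q u = [:: b'] /\ b'.1 = b.1.
      by case: Hu => ->; [exists b | exists (orev b)].
    have HV := cf_V h0 h1 hne hini.
    case: (cf_coll h0 h1 hne hini nab Hab) => [[e1 e2]|[e1 e2]].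
    * have := HI i u _ _ (end_in HQ Ea e1) (end_in HQ Eb' (etrans eb' e2)).
      by rewrite HV => /(_ erefl) /eqP; rewrite E.
    * have := HI i u _ _ (end_in HQ Ea e1) (end_in HQ Eb' (etrans eb' e2)).
      by rewrite HV => /(_ erefl) /eqP; rewrite eq_sym E.
-
  apply: leq_trans (card_sub3 (A := Dset n Q) (B := Sset n Q a1) (C := set0) _) _; last first.
    by rewrite cards0 addn0 leq_add2l; apply: leq_trans (Sset_le1 n Q a1) _.
  apply/subsetP => i Hi; rewrite !in_setU; case: (boolP (i \in Dset n Q)) => //= Hout.
  have [a Ea H] := key i Hi Hout.
  have Hmix : 1 < size (mE (proper_full_fold G a0 a1).2 a) -> i \in Sset n Q a1.
    rewrite (pf_size h0 h1 hne hini); case: eqP => // e _; exact: Sset_in Hout Ea e.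
  case: H => [H|[Hs [u [b [_ _ nab Hab]]]]]; first by rewrite Hmix.
  by rewrite (pf_inj h0 h1 hne hini Hs Hab) eqxx in nab.
-
  apply: leq_trans (card_sub3 (A := Dset n Q) (B := Sset n Q a0) (C := Sset n Q a1) _) _; last first.
    by rewrite -addnA leq_add2l; apply: leq_trans (leq_add (Sset_le1 n Q a0) (Sset_le1 n Q a1)) _.
  apply/subsetP => i Hi; rewrite !in_setU; case: (boolP (i \in Dset n Q)) => //= Hout.
  have [a Ea H] := key i Hi Hout.
  have Hmix : 1 < size (mE (partial_fold G a0 a1).2 a) -> (i \in Sset n Q a0) || (i \in Sset n Q a1).
    rewrite (pa_size h0 h1 hne hini); case: eqP => e.
      by rewrite (Sset_in Hout Ea e).
    case: eqP => // e' _; by rewrite (Sset_in Hout Ea e') orbT.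
  case: H => [H|[Hs [u [b [_ _ nab Hab]]]]]; first by rewrite Hmix.
  by rewrite (pa_inj h0 h1 hne hini Hs Hab) eqxx in nab.
Qed.

Lemma mapP_gid s : mapP gid s = s.
Proof. by elim: s => //= a s IH; rewrite mapP_cons IH. Qed.

Lemma fstE_in (P : pred oedge) s : s != [::] -> all P s -> P (fstE s).
Proof. by case: s => //= a s _ /andP[]. Qed.
Lemma lstE_in (P : pred oedge) s : s != [::] -> all P s -> P (lstE s).
Proof. move=> ne /allP H; apply: H; case: s ne => // a s _; rewrite /lstE /=; exact: mem_last. Qed.

Lemma D_chain G ds n Q al be : chain_valid G ds -> hypQ G n Q al be ->
  Inj (mV (chain_map G ds)) n al be ->
  #|Dset n (fun j => mapP (chain_map G ds) (Q j))| <= #|Dset n Q| + cnt kw G ds.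
Proof.
elim: ds G Q al be => /= [|d ds IH] G Q al be.
  by move=> _ _ _; rewrite addn0 (@Dset_ext n _ Q) // => j; rewrite mapP_gid.
move=> /andP[Hd Hc] HQ HI.
have [Hn Hr Hval Hends] := fold_goodP Hd.
rewrite (@Dset_ext n _ (fun j => mapP (chain_map (apply_fold G d).1 ds) (mapP (apply_fold G d).2 (Q j)))); last first.
  by move=> j; rewrite mapP_comp.
apply: leq_trans (IH _ (fun j => mapP (apply_fold G d).2 (Q j))
                    (fun j => mV (apply_fold G d).2 (al j)) (fun j => mV (apply_fold G d).2 (be j)) Hc _ _) _.
- move=> j; have [Q0 Qv Qa Qb] := HQ j; split.
  + by rewrite mapP_nil.
  + by apply: all_mapP Qv => a Ha; exact: Hval.
  + rewrite fstE_mapP //; have [E1 _] := Hends _ (fstE_in Q0 Qv); by rewrite E1 Qa.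
  + rewrite lstE_mapP //; have [_ E2] := Hends _ (lstE_in Q0 Qv); by rewrite E2 Qb.
- move=> i j v1' v2' H1 H2 E.
  have [v1 Hv1 E1] : exists2 v1, (v1 == al i) || (v1 == be i) & v1' = mV (apply_fold G d).2 v1.
    by case/orP: H1 => /eqP ->; [exists (al i); rewrite ?eqxx | exists (be i); rewrite ?eqxx ?orbT].
  have [v2 Hv2 E2] : exists2 v2, (v2 == al j) || (v2 == be j) & v2' = mV (apply_fold G d).2 v2.
    by case/orP: H2 => /eqP ->; [exists (al j); rewrite ?eqxx | exists (be j); rewrite ?eqxx ?orbT].
  rewrite E1 E2 in E *; by rewrite (HI i j v1 v2 Hv1 Hv2 E).
- rewrite addnA leq_add2r; exact: (D_fold (rest := chain_map (apply_fold G d).1 ds) Hd HQ HI).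
Qed.

Lemma head_valid G f x : is_gmap G G f -> x < nE G -> (head (0, true) (mE f (x, true))).1 < nE G.
Proof.
case=> [[_ Hp _] Hn] Hx; have Hv : ovalid G (x, true) by [].
move: (Hp _ Hv) (Hn _ Hv); case: (mE f (x, true)) => [|a s] //= /and3P[/andP[/andP[Ha _] _] _ _] _.
exact: Ha.
Qed.

Lemma stacks_le G f : is_gmap G G f -> expanding G f ->
  num_stacks G f <= #|[set i : 'I_(nE G) | mixing f i || surplus G f i]|.
Proof.
move=> Hf Hexp.
set Dm := [set i : 'I_(nE G) | mixing f i || surplus G f i].
pose R := @stack_rel G f.
have Rsym : connect_sym R.
  by apply: sym_connect_sym => x y; rewrite /R /stack_rel orbC.
pose nxt (i : 'I_(nE G)) : 'I_(nE G) := insubd i (head (0, true) (mE f (i : nat, true))).1.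
have nxtE : forall i : 'I_(nE G), (nxt i : nat) = (head (0, true) (mE f (i : nat, true))).1.
  by move=> i; rewrite /nxt insubdK //; exact: head_valid.
have Hrev : forall x, x < nE G -> mE f (x, false) = revp (mE f (x, true)).
  by case: Hf => [[_ _ H] _].
have Hne : forall x, x < nE G -> mE f (x, true) != [::].
  by case: Hf => [_ H] x Hx; apply: H.
have Hit : forall (i : 'I_(nE G)) k, (forall j, j < k -> iter j nxt i \notin Dm) ->
    connect R i (iter k nxt i) /\
    exists b, mE (iter k (gcomp f) gid) (i : nat, true) = [:: ((iter k nxt i : nat), b)].
  move=> i; elim=> [|k IH] Hk; first by split; [exact: connect0 | exists true].
  have [IH1 [b IH2]] := IH (fun j Hj => Hk j (ltnW Hj)).
  have Hy := Hk k (ltnSn k); set y := iter k nxt i in IH1 IH2 Hy *.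
  move: Hy; rewrite inE negb_or => /andP[Hmix Hsur].
  have [c Ec] : exists c, mE f (y : nat, true) = [:: c].
    move: Hmix (Hne y (ltn_ord y)); rewrite /mixing; case: (mE f (y : nat, true)) => [|c [|c' s]] //= _ _.
    by exists c.
  split.
    apply: connect_trans IH1 (connect1 _); rewrite /R /stack_rel /stack_step Hmix Hsur /=.
    by rewrite nxtE Ec eqxx.
  rewrite iterS /= IH2 mapP1 -/y nxtE Ec /=.
  case: b {IH2}; first by exists c.2; rewrite Ec; case: c {Ec}.
  by exists (~~ c.2); rewrite Hrev // Ec; case: c {Ec}.
have claim : forall i : 'I_(nE G), exists2 d, d \in Dm & connect R i d.
  move=> i; have [n0 Hn0] := Hexp i (ltn_ord i) 2.
  have H2 := Hn0 n0 (leqnn n0).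
  case: (boolP (has (fun k => iter k nxt i \in Dm) (iota 0 n0))) => Hh.
    have Hex : exists k, iter k nxt i \in Dm by case/hasP: Hh => k _ Pk; exists k.
    case: (ex_minnP Hex) => k Pk Hmin.
    exists (iter k nxt i) => //.
    have [] := Hit i k => // j Hj; apply/negP => Pj; have := Hmin j Pj; lia.
  have [_ [b Eb]] := Hit i n0 (fun j Hj => (hasPn Hh) j ltac:(by rewrite mem_iota)).
  by rewrite Eb in H2.
rewrite /num_stacks; apply: leq_trans (leq_imset_card (fun i => [set j | connect R i j]) Dm).
apply: subset_leq_card; apply/subsetP => X /imsetP [i _ ->].
have [d Hd Hc] := claim i; apply/imsetP; exists d => //.
by apply/setP => j; rewrite !inE (same_connect Rsym Hc).
Qed.

Lemma surj_le n1 n2 (phi : nat -> nat) : (forall x, x < n1 -> phi x < n2) ->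
  (forall y, y < n2 -> exists2 x, x < n1 & phi x = y) -> n2 <= n1.
Proof.
case: n2 => // n2 H1 H2.
have : #|[set: 'I_n2.+1]| <= #|[set (inord (phi i) : 'I_n2.+1) | i : 'I_n1]|.
  apply: subset_leq_card; apply/subsetP => y _.
  have [x Hx E] := H2 y (ltn_ord y); apply/imsetP; exists (Ordinal Hx) => //.
  apply: val_inj => /=; rewrite inordK; [by rewrite E | rewrite E; exact: ltn_ord].
rewrite cardsT card_ord => /leq_trans; apply; apply: leq_trans (leq_imset_card _ _) _.
by rewrite card_ord.
Qed.

Lemma inj_le n1 n2 (phi : nat -> nat) : (forall x, x < n1 -> phi x < n2) ->
  (forall x y, x < n1 -> y < n1 -> phi x = phi y -> x = y) -> n1 <= n2.
Proof.
case: n2 => [|n2] H1 H2.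
  by case: n1 H1 H2 => // n1 H1 _; have := H1 0 (ltn0Sn n1).
have Hinj : injective (fun i : 'I_n1 => (inord (phi i) : 'I_n2.+1)).
  move=> i j /(congr1 val); rewrite /= !inordK ?H1 // => E; apply: val_inj; exact: H2 (ltn_ord i) (ltn_ord j) E.
by have := leq_card _ Hinj; rewrite !card_ord.
Qed.

Lemma chain_all_valid G ds s : chain_valid G ds -> all (ovalid G) s ->
  all (ovalid (chain_end G ds)) (mapP (chain_map G ds) s).
Proof.
elim: ds G s => /= [|d ds IH] G s; first by rewrite mapP_gid.
move=> /andP[Hd Hc] Hs; rewrite mapP_comp; apply: IH => //.
have [_ _ Hval _] := fold_goodP Hd; exact: all_mapP Hval Hs.
Qed.

Section Iso.
Variables (E G : graph) (h : gmap).
Hypothesis Hh : is_giso E G h.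

Let hd a := head a (mE h a).

Lemma h_single a : ovalid E a -> mE h a = [:: hd a].
Proof.
case: Hh => _ _ Hs _ Ha; move: (Hs a Ha); rewrite /hd; case: (mE h a) => [|b [|c t]] //.
Qed.

Lemma mapP_h s : all (ovalid E) s -> mapP h s = map hd s.
Proof. elim: s => //= a s IH /andP[Ha Hs]; by rewrite mapP_cons h_single // IH. Qed.

Lemma mapP_h_inj s t : all (ovalid E) s -> all (ovalid E) t -> (mapP h s == mapP h t) = (s == t).
Proof.
move=> Hs Ht; apply/eqP/eqP => [|->] //; rewrite mapP_h // mapP_h //.
case: Hh => _ _ _ [_ Hinj _].
elim: s t Hs Ht => [|a s IH] [|b t] //= /andP[Ha Hs] /andP[Hb Ht] [E1 E2].
by rewrite (Hinj a b Ha Hb E1) (IH t Hs Ht E2).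
Qed.

Lemma h_rev a : ovalid E a -> mE h (orev a) = revp (mE h a).
Proof.
case: Hh => [[[_ _ Hr] _] _ _ _]; case: a => x [] Ha; rewrite /orev /= Hr //.
by rewrite revpK.
Qed.

Lemma size_mapP_h s : all (ovalid E) s -> size (mapP h s) = size s.
Proof. by move=> Hs; rewrite mapP_h // size_map. Qed.
End Iso.

Unset Implicit Arguments.

Theorem lemma3p3 (G : graph) (f : gmap) (ds : seq fold_spec) (h : gmap) (m p : nat) :
  wf_graph G -> is_gmap G G f -> irreducible_map G f -> expanding G f ->
  homotopy_equiv G G f ->
  fold_decomposition G f ds h -> size ds = m ->
  num_stacks G f = p ->
  (m <= \sum_(x < nE G) (size (mE f (x : nat, true)) - 1)) /\
  (bij_on [pred v | v < nV G] [pred v | v < nV G] (mV f) -> p <= m).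
Proof.
move=> Hwf Hf _ Hexp _ [Hc Hiso Hgeq] <- <-.
have [Hgm Hbv Hs1 Hbe] := Hiso.
have HnE : nE G <= nE (chain_end G ds).
  case: Hbe => HbA _ HbS.
  apply: (@surj_le _ _ (fun x => (head (x, true) (mE h (x, true))).1)).
    move=> x Hx; exact: (HbA (x, true) Hx).
  move=> y Hy; have [a Ha Ea] := HbS (y, true) Hy; exists a.1 => //.
  move: Ha Ea; case: a => x [] Ha /= Ea; first by rewrite Ea.
  have Er := h_rev Hiso (a := (x, false)) Ha; rewrite /orev /= in Er.
  by rewrite Er (h_single Hiso Ha) /=; move: Ea; rewrite (h_single Hiso Ha) /= => ->.
have HnV : nV (chain_end G ds) <= nV G.
  case: Hbv => HvA Hvinj _.
  apply: (@inj_le _ _ (mV h)) => [x Hx|x y Hx Hy]; [exact: (HvA x Hx) | exact: (Hvinj x y Hx Hy)].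
have Hval : forall x, x < nE G -> all (ovalid (chain_end G ds)) (mE (chain_map G ds) (x, true)).
  move=> x Hx; have := @chain_all_valid G ds [:: (x, true)] Hc; rewrite mapP1; apply.
  by rewrite /= andbT.
have HF : forall x, x < nE G -> mE f (x, true) = mapP h (mE (chain_map G ds) (x, true)).
  by move=> x Hx; case: Hgeq => _ H; exact: (H (x, true) Hx).
have HFs : forall x, x < nE G -> size (mE f (x, true)) = size (mE (chain_map G ds) (x, true)).
  by move=> x Hx; rewrite HF // (size_mapP_h Hiso) // Hval.
have Hpos : forall x, x < nE G -> 0 < size (mE f (x, true)).
  by case: Hf => _ H x Hx; rewrite lt0n size_eq0 H.
have H1s : \sum_(i < nE G) 1 = nE G by rewrite sum1_card card_ord.
split.
  have HS := @S_chain G ds (nE G) (fun i => [:: (i, true)]) Hc.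
  have HC : covering G (nE G) (fun i => [:: (i, true)]).
    by move=> x Hx; exists x => //=; rewrite eqxx.
  have Hsum1 : sumI (nE G) (fun i => size [:: (i, true)]) = nE G.
    by rewrite /sumI (eq_bigr (fun _ => 1)) // sum1_card card_ord.
  have Hsum2 : sumI (nE G) (fun i => size (mapP (chain_map G ds) [:: (i, true)])) =
     \sum_(x < nE G) (size (mE f (x : nat, true)) - 1) + \sum_(i < nE G) 1.
    rewrite /sumI -big_split /=; apply: eq_bigr => i _; rewrite mapP1 -HFs //.
    have := Hpos i (ltn_ord i); lia.
  move: (HS HC); rewrite Hsum1 Hsum2 H1s; lia.
move=> Hbij.
have Hp := stacks_le Hf Hexp.
have E1 : [set i : 'I_(nE G) | mixing f i || surplus G f i] = Dset (nE G) (fun i => mE f (i, true)).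
  apply/setP => i; rewrite !inE /surplus.
  case H: (mixing f i); move: H; rewrite /mixing => -> //=.
have E2 : Dset (nE G) (fun i => mE f (i, true)) = Dset (nE G) (fun i => mapP (chain_map G ds) [:: (i, true)]).
  apply/setP => i; rewrite !inE !mapP1 HF // (size_mapP_h Hiso) ?Hval //; congr orb.
  apply: eq_existsb => u; rewrite !mapP1 !HF //.
  rewrite -(mapP_revp (P := ovalid (chain_end G ds))) ?Hval //; last first.
    by move=> a Ha; exact: (h_rev Hiso).
  by rewrite !(mapP_h_inj Hiso) ?Hval ?all_revp ?Hval //; move=> a; exact: ovalid_rev.
have E3 := @D_chain G ds (nE G) (fun i => [:: (i, true)]) (ini G) (ter G) Hc.
have E4 : Dset (nE G) (fun i => [:: (i, true)]) = set0.
  apply/setP => i; rewrite !inE /=; apply/existsP => -[u /andP[nui H]].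
  case/orP: H => /eqP; last by case.
  by case=> /val_inj E; rewrite E eqxx in nui.
have [C1 C2] := cnt_graph Hc; have C3 := cnt_size G ds; have C4 := cnt_w G ds.
have : #|Dset (nE G) (fun i => mapP (chain_map G ds) [:: (i, true)])| <= cnt kw G ds.
  rewrite -[cnt kw G ds]add0n -(cards0 'I_(nE G)) -E4; apply: E3.
    move=> j; split => //=; by rewrite andbT /ovalid /=.
  move=> i j v1 v2 H1 H2 Ev.
  have Hv : forall (k : 'I_(nE G)) v, (v == ini G k) || (v == ter G k) -> v < nV G.
    by move=> k v; have /andP[Ha Hb] := Hwf k (ltn_ord k); case/orP => /eqP ->.
  case: Hbij => _ Hinj _; apply: Hinj; rewrite ?inE ?(Hv i v1) ?(Hv j v2) //.
  by case: Hgeq => HV _; rewrite !HV ?(Hv i v1) ?(Hv j v2) //= Ev.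
move=> H; apply: leq_trans Hp _; rewrite E1 E2; apply: leq_trans H _; lia.
Qed.
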